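(* Let $f:\mathbb{R}^d\to\mathbb{R}$ be convex and differentiable, and suppose that $\nabla^2f(\boldsymbol x)\preceq L\boldsymbol I$ for all $\boldsymbol x\in B(\boldsymbol x_0,M)$, for some $\boldsymbol x_0\in\mathbb{R}^d$, $0<M\le+\infty$ and $0<L<+\infty$. If $\lambda>\|\nabla f(\boldsymbol x_0)\|_2$, then for all $\boldsymbol x\in B\big(\boldsymbol x_0,\min\{(\lambda-\|\nabla f(\boldsymbol x_0)\|_2)/L,M\}\big)$, $$f(\boldsymbol x)=\inf_{\boldsymbol y\in\mathbb{R}^d}\{f(\boldsymbol y)+\lambda\|\boldsymbol x-\boldsymbol y\|_2\}\qquad\text{and}\qquad\mathop{\mathrm{argmin}}_{\boldsymbol y\in\mathbb{R}^d}\{f(\boldsymbol y)+\lambda\|\boldsymbol x-\boldsymbol y\|_2\}=\{\boldsymbol x\}.$$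
   Context: $B(\boldsymbol x,r)$ is the closed Euclidean ball; $f$ is assumed twice differentiable on $B(\boldsymbol x_0,M)$ so that the Hessian bound makes sense. *)

(* Defs.v *)
From HB Require Import structures.
From mathcomp Require Import all_boot all_order all_algebra.
From mathcomp Require Import all_classical all_reals all_analysis.
Set Implicit Arguments. Unset Strict Implicit. Unset Printing Implicit Defensive.
Import Order.TTheory GRing.Theory Num.Theory.
Import numFieldNormedType.Exports.
Local Open Scope classical_set_scope.
Local Open Scope ring_scope.

Section Defs.
Context {R : realType} {d : nat}.

(* Euclidean (l2) norm on R^d (the library's default norm on 'rV is the sup norm). *)
Definition enorm (v : 'rV[R]_d) : R := Num.sqrt (\sum_(i < d) (v ord0 i) ^+ 2).

Definition ebasis (i : 'I_d) : 'rV[R]_d := delta_mx ord0 i.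

Definition grad (f : 'rV[R]_d -> R) (x : 'rV[R]_d) : 'rV[R]_d :=
  \row_(i < d) 'D_(ebasis i) f x.

Definition hessian (f : 'rV[R]_d -> R) (x : 'rV[R]_d) : 'M[R]_d :=
  \matrix_(i < d, j < d) 'D_(ebasis j) (fun y => 'D_(ebasis i) f y) x.

Definition eball (x0 : 'rV[R]_d) (r : \bar R) : set 'rV[R]_d :=
  [set x | ((enorm (x - x0))%:E <= r)%E].

Definition convex_fun (f : 'rV[R]_d -> R) : Prop :=
  forall (x y : 'rV[R]_d) (t : R), 0 <= t -> t <= 1 ->
    f (t *: x + (1 - t) *: y) <= t * f x + (1 - t) * f y.

Definition loewner_le_scalar (A : 'M[R]_d) (L : R) : Prop :=
  forall v : 'rV[R]_d, (v *m A *m v^T) ord0 ord0 <= L * enorm v ^+ 2.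

End Defs.

(* Main.v *)
Require Import Defs.
From HB Require Import structures.
From mathcomp Require Import all_boot all_order all_algebra.
From mathcomp Require Import all_classical all_reals all_analysis.
From mathcomp Require Import ring lra.
Set Implicit Arguments. Unset Strict Implicit. Unset Printing Implicit Defensive.
Import Order.TTheory GRing.Theory Num.Theory.
Import numFieldNormedType.Exports.
Local Open Scope classical_set_scope.
Local Open Scope ring_scope.

Section Alg.
Context {R : realType} {d : nat}.
Implicit Types a b v w : 'rV[R]_d.

Definition dot a b : R := \sum_i a ord0 i * b ord0 i.

Lemma dotC a b : dot a b = dot b a.
Proof. by apply: eq_bigr => i _; rewrite mulrC. Qed.
Lemma dotDl a b v : dot (a + b) v = dot a v + dot b v.
Proof. by rewrite /dot -big_split; apply: eq_bigr => i _; rewrite mxE mulrDl. Qed.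
Lemma dotZl t a v : dot (t *: a) v = t * dot a v.
Proof. by rewrite /dot mulr_sumr; apply: eq_bigr => i _; rewrite mxE mulrA. Qed.
Lemma dotNl a v : dot (- a) v = - dot a v.
Proof. by rewrite -scaleN1r dotZl mulN1r. Qed.
Lemma dotBl a b v : dot (a - b) v = dot a v - dot b v.
Proof. by rewrite dotDl dotNl. Qed.
Lemma dotDr a b v : dot v (a + b) = dot v a + dot v b.
Proof. by rewrite dotC dotDl !(dotC v). Qed.
Lemma dotZr t a v : dot v (t *: a) = t * dot v a.
Proof. by rewrite dotC dotZl dotC. Qed.
Lemma dotNr a v : dot v (- a) = - dot v a.
Proof. by rewrite dotC dotNl dotC. Qed.
Lemma dotBr a b v : dot v (a - b) = dot v a - dot v b.
Proof. by rewrite dotDr dotNr. Qed.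
Lemma dot0l v : dot 0 v = 0.
Proof. by rewrite /dot big1 // => i _; rewrite mxE mul0r. Qed.
Lemma dot_ge0 v : 0 <= dot v v.
Proof. by apply: sumr_ge0 => i _; rewrite -expr2 sqr_ge0. Qed.

Lemma enormE v : enorm v = Num.sqrt (dot v v).
Proof. by rewrite /enorm /dot; congr Num.sqrt; apply: eq_bigr => i _; rewrite expr2. Qed.
Lemma enorm_ge0 v : 0 <= enorm v.
Proof. by rewrite enormE sqrtr_ge0. Qed.
Lemma enorm_sqr v : enorm v ^+ 2 = dot v v.
Proof. by rewrite enormE sqr_sqrtr // dot_ge0. Qed.

Lemma quad_disc (A B C : R) : (forall t, 0 <= A + 2 * t * B + t ^+ 2 * C) ->
  B ^+ 2 <= A * C.
Proof.
move=> H; have A0 : 0 <= A by have := H 0; rewrite expr0n /=; lra.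
have [C0|C0] := ltP 0 C.
  have := H (- B / C).
  have -> : A + 2 * (- B / C) * B + (- B / C) ^+ 2 * C = A - B ^+ 2 / C.
    by field; rewrite gt_eqF.
  by rewrite subr_ge0 ler_pdivrMr // mulrC.
have [B0|B0] := eqVneq B 0.
  rewrite B0 expr0n /=; case: (ltP C 0) => Cn; last first.
    by rewrite (@le_anti _ _ C 0) ?C0 ?Cn // mulr0.
  have := H (Num.sqrt ((A + 1) / (- C))).
  rewrite B0 mulr0 addr0 sqr_sqrtr; last by rewrite divr_ge0 // ?oppr_ge0; lra.
  have -> : (A + 1) / - C * C = - (A + 1) by field; rewrite ?oppr_eq0 lt_eqF.
  lra.
have := H (- (A + 1) / (2 * B)).
have -> : A + 2 * (- (A + 1) / (2 * B)) * B = -1 by field.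
move=> H2; have : (- (A + 1) / (2 * B)) ^+ 2 * C <= 0.
  by apply: mulr_ge0_le0 => //; rewrite sqr_ge0.
lra.
Qed.

Lemma dot_CS a b : dot a b ^+ 2 <= dot a a * dot b b.
Proof.
apply: quad_disc => t; have := dot_ge0 (a + t *: b).
rewrite !(dotDl, dotDr, dotZl, dotZr) (dotC b a).
suff -> : dot a a + t * dot a b + (t * dot a b + t * (t * dot b b)) =
  dot a a + 2 * t * dot a b + t ^+ 2 * dot b b by [].
ring.
Qed.

Lemma sqr_le (x y : R) : 0 <= y -> x ^+ 2 <= y ^+ 2 -> x <= y.
Proof. move=> y0 h; rewrite !expr2 in h; nra. Qed.

Lemma dot_le a b : dot a b <= enorm a * enorm b.
Proof.
apply: sqr_le; first by rewrite mulr_ge0 // enorm_ge0.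
by rewrite exprMn !enorm_sqr dot_CS.
Qed.

Lemma dot_ge a b : - (enorm a * enorm b) <= dot a b.
Proof.
have := dot_le (- a) b; rewrite dotNl.
have -> : enorm (- a) = enorm a by rewrite !enormE dotNl dotNr opprK.
lra.
Qed.

Lemma enormD a b : enorm (a + b) <= enorm a + enorm b.
Proof.
apply: sqr_le; first by rewrite addr_ge0 // enorm_ge0.
rewrite enorm_sqr dotDl !dotDr (dotC b a) sqrrD !enorm_sqr.
have := dot_le a b; lra.
Qed.

Lemma enormZ t a : enorm (t *: a) = `|t| * enorm a.
Proof.
rewrite !enormE dotZl dotZr mulrA -expr2 sqrtrM ?sqr_ge0 //.
by rewrite sqrtr_sqr.
Qed.

Lemma enormN a : enorm (- a) = enorm a.
Proof. by rewrite -scaleN1r enormZ normrN normr1 mul1r. Qed.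

Lemma enormB a b : enorm (a - b) = enorm (b - a).
Proof. by rewrite -enormN opprB. Qed.

Lemma enorm_eq0 a : enorm a = 0 -> a = 0.
Proof.
rewrite enormE => /eqP; rewrite sqrtr_eq0 => h.
have h0 : dot a a = 0 by apply/le_anti; rewrite h dot_ge0.
apply/rowP => i; rewrite mxE.
have hi : a ord0 i * a ord0 i = 0.
  by apply: (psumr_eq0P _ h0) => // j _; rewrite -expr2 sqr_ge0.
move/eqP: hi; rewrite mulf_eq0 orbb => /eqP.
by move=> ->.
Qed.
End Alg.


Section Calc.
Context {R : realType} {d : nat}.
Implicit Types p q a b v w : 'rV[R]_d.

Lemma line_derive (W : normedModType R) (F : 'rV[R]_d -> W) p v t :
  differentiable F (p + t *: v) ->
  is_derive t 1 (fun s => F (p + s *: v)) ('d F (p + t *: v) v).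
Proof.
move=> dF.
have E : (fun h : R => h^-1 *: (((fun s => F (p + s *: v)) \o shift t) (h *: 1)
            - F (p + t *: v)))
  = (fun h : R => h^-1 *: ((F \o shift (p + t *: v)) (h *: v) - F (p + t *: v))).
  apply/funext => h /=; congr (_ *: (F _ - _)).
  by rewrite scalerDl [h *: (1 : R)]mulr1 addrCA.
apply: DeriveDef.
  by rewrite /derivable E; exact: diff_derivable.
by rewrite /derive E; exact: deriveE.
Qed.

Lemma deriv_le_of (phi : R -> R) c : derivable phi 0 1 ->
  (forall t, 0 < t < 1 -> phi t - phi 0 <= t * c) -> 'D_1 phi 0 <= c.
Proof.
move=> dphi H.
rewrite /derive cvg_at_rightE //.
apply: limr_le.
  rewrite -(cvg_at_rightE (fun h : R => h^-1 *: ((phi \o shift 0) _ - phi 0))) //.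
  apply: cvg_trans dphi; apply: cvg_app.
  move=> A [e egt0 Ae]; exists e => // x xe xgt0; apply: Ae => //.
  exact/lt0r_neq0.
near=> h.
have h0 : 0 < h by near: h; exists 1 => //=.
have h1 : h < 1.
  near: h; exists 1 => //= x; rewrite /ball /= sub0r normrN => /ltr_normlP [] //.
have := H h; rewrite h0 h1 => /(_ isT).
rewrite /= [h *: (1:R)]mulr1 addr0 => Hh.
rewrite -[_ *: _]/(h^-1 * _) mulrC ler_pdivrMr //.
by rewrite mulrC.
Unshelve. all: by end_near. Qed.

Lemma diff_grad (f : 'rV[R]_d -> R) p v : differentiable f p ->
  'd f p v = dot (grad f p) v.
Proof.
move=> df; rewrite {1}(row_sum_delta v) linear_sum /dot; apply: eq_bigr => j _.
rewrite linearZ /= -deriveE // /grad mxE /ebasis mulrC.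
by [].
Qed.

Lemma first_order (f : 'rV[R]_d -> R) : convex_fun f ->
  (forall x, differentiable f x) ->
  forall p q, f p + dot (grad f p) (q - p) <= f q.
Proof.
move=> cf df p q.
pose phi s := f (p + s *: (q - p)).
have Hd := @line_derive _ f p (q - p) 0 (df _).
have := @deriv_le_of phi (f q - f p) (@ex_derive _ _ _ _ _ _ _ Hd).
rewrite (@derive_val _ _ _ _ _ _ _ Hd) scale0r addr0 diff_grad //.
have -> : phi 0 = f p by rewrite /phi scale0r addr0.
move=> /(_ _) H; suff : dot (grad f p) (q - p) <= f q - f p by lra.
apply: H => t /andP [t0 t1].
rewrite /phi ?scale0r ?addr0.
have := cf q p t (ltW t0) (ltW t1).
have -> : t *: q + (1 - t) *: p = p + t *: (q - p).
  by rewrite scalerBr scalerBl scale1r addrCA.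
lra.
Qed.

End Calc.


Section Lin.
Context {R : realType} {d : nat}.

Definition rcoord (i : 'I_d) (v : 'rV[R]_d) : R := v ord0 i.
Fact rcoord_lin i : linear (rcoord i).
Proof. by move=> a u v; rewrite /rcoord !mxE. Qed.
HB.instance Definition _ i :=
  GRing.isLinear.Build R 'rV[R]_d R *:%R (rcoord i) (rcoord_lin i).

Lemma rcoord_cont i : continuous (rcoord i).
Proof. exact: coord_continuous. Qed.

Lemma rcoord_diff i x : differentiable (rcoord i) x.
Proof. exact/linear_differentiable/rcoord_cont. Qed.

Lemma diff_rcoord i x : 'd (rcoord i) x = rcoord i :> (_ -> _).
Proof. by rewrite diff_lin //; exact: rcoord_cont. Qed.

Definition dotr (a : 'rV[R]_d) (v : 'rV[R]_d) : R := dot v a.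
Fact dotr_lin a : linear (dotr a).
Proof. by move=> k u v; rewrite /dotr dotDl dotZl. Qed.
HB.instance Definition _ a :=
  GRing.isLinear.Build R 'rV[R]_d R *:%R (dotr a) (dotr_lin a).

Lemma dotr_diff a x : differentiable (dotr a) x.
Proof.
have -> : dotr a = \sum_(i < d) (rcoord i * cst (a ord0 i)).
  by apply/funext => v; rewrite fct_sumE /dotr /dot; apply: eq_bigr.
apply: differentiable_sum => i; apply: differentiableM => //.
exact: rcoord_diff.
Qed.

Lemma dotr_cont a : continuous (dotr a).
Proof. by move=> x; apply: differentiable_continuous; exact: dotr_diff. Qed.

Lemma diff_dotr a x : 'd (dotr a) x = dotr a :> (_ -> _).
Proof. by rewrite diff_lin //; exact: dotr_cont. Qed.

Lemma diff_eps (F : 'rV[R]_d -> R) p : differentiable F p ->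
  forall e, 0 < e -> exists2 del, 0 < del &
    forall r, `|r| < del -> `|F (p + r) - F p - 'd F p r| <= e * `|r|.
Proof.
move=> dF e e0.
have := diff_locally dF; set k := 'o _ => E.
have /(littleoP [littleo of k]) /nbhs_ballP [del del0 Hd] := e0.
exists del => // r rd.
have := congr1 (fun g => g r) E => /= Er.
have -> : F (p + r) - F p - 'd F p r = k r.
  rewrite [p + r]addrC Er -[(_ + _ + k) r]/(F p + 'd F p r + k r); lra.
apply: Hd; rewrite -ball_normE /= sub0r normrN //.
Qed.

End Lin.


Section Second.
Context {R : realType} {d : nat}.
Implicit Types p q a b v w : 'rV[R]_d.

Lemma hess_entry (f : 'rV[R]_d -> R) p i j : differentiable (grad f) p ->
  hessian f p i j = ('d (grad f) p (ebasis j)) ord0 i.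
Proof.
move=> dG; rewrite /hessian mxE.
have -> : (fun y => 'D_(ebasis i) f y) = rcoord i \o grad f.
  by apply/funext => y; rewrite /rcoord /grad /= mxE.
rewrite deriveE; last by apply: differentiable_comp => //; exact: rcoord_diff.
by rewrite diff_comp // ?diff_rcoord //; exact: rcoord_diff.
Qed.

Lemma dG_sum (G : 'rV[R]_d -> 'rV[R]_d) p v :
  'd G p v = \sum_k v ord0 k *: 'd G p (ebasis k).
Proof.
rewrite {1}(row_sum_delta v) linear_sum; apply: eq_bigr => k _.
by rewrite linearZ.
Qed.

Lemma quad_hess (f : 'rV[R]_d -> R) p v : differentiable (grad f) p ->
  (v *m hessian f p *m v^T) ord0 ord0 = dot ('d (grad f) p v) v.
Proof.
move=> dG; rewrite dG_sum /dot mxE.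
under eq_bigr => k _ do rewrite !mxE.
under [RHS]eq_bigr => j _ do rewrite summxE.
under [RHS]eq_bigr => j _ do under eq_bigr => k _ do rewrite mxE.
under eq_bigr => k _ do rewrite mulr_suml.
rewrite exchange_big; apply: eq_bigr => j _.
rewrite mulr_suml; apply: eq_bigr => k _.
rewrite hess_entry //; ring.
Qed.


Lemma deriv_ge_of (phi : R -> R) c : derivable phi 0 1 ->
  (forall t, 0 < t < 1 -> t * c <= phi t - phi 0) -> c <= 'D_1 phi 0.
Proof.
move=> dphi H.
rewrite /derive cvg_at_rightE //.
apply: limr_ge.
  rewrite -(cvg_at_rightE (fun h : R => h^-1 *: ((phi \o shift 0) _ - phi 0))) //.
  apply: cvg_trans dphi; apply: cvg_app.
  move=> A [e egt0 Ae]; exists e => // x xe xgt0; apply: Ae => //.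
  exact/lt0r_neq0.
near=> h.
have h0 : 0 < h by near: h; exists 1 => //=.
have h1 : h < 1.
  near: h; exists 1 => //= x; rewrite /ball /= sub0r normrN => /ltr_normlP [] //.
have := H h; rewrite h0 h1 => /(_ isT).
rewrite /= [h *: (1:R)]mulr1 addr0 => Hh.
rewrite -[_ *: _]/(h^-1 * _) mulrC ler_pdivlMr //.
by rewrite mulrC.
Unshelve. all: by end_near. Qed.

Lemma psd (f : 'rV[R]_d -> R) p v : convex_fun f ->
  (forall x, differentiable f x) -> differentiable (grad f) p ->
  0 <= dot ('d (grad f) p v) v.
Proof.
move=> cf df dG.
have dK : differentiable (dotr v \o grad f) (p + 0 *: v).
  by rewrite scale0r addr0; apply: differentiable_comp => //; exact: dotr_diff.
have Hd := line_derive dK.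
have := @deriv_ge_of (fun s => (dotr v \o grad f) (p + s *: v)) 0
  (@ex_derive _ _ _ _ _ _ _ Hd).
rewrite (@derive_val _ _ _ _ _ _ _ Hd) scale0r addr0 diff_comp //; last first.
  exact: dotr_diff.
rewrite diff_dotr /= /dotr; apply => t /andP [t0 t1].
rewrite /= /dotr ?scale0r ?addr0 ?mul0r ?mulr0.
have h1 := first_order cf df p (p + t *: v).
have h2 := first_order cf df (p + t *: v) p.
move: h1 h2; rewrite addrAC subrr add0r.
have -> : p - (p + t *: v) = - (t *: v) by rewrite opprD addrA subrr add0r.
rewrite dotNr !dotZr => h1 h2.
have : 0 <= t * (dot (grad f (p + t *: v)) v - dot (grad f p) v) by lra.
nra.
Qed.

End Second.


Section Schwarz.
Context {R : realType} {d : nat}.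
Variables (f : 'rV[R]_d -> R) (p : 'rV[R]_d).
Hypothesis df : forall x, differentiable f x.
Hypothesis dG : differentiable (grad f) p.

Let K a := dotr a \o grad f.

Let K_diff a : differentiable (K a) p.
Proof. by apply: differentiable_comp => //; exact: dotr_diff. Qed.

Let dK a r : 'd (K a) p r = dot ('d (grad f) p r) a.
Proof. by rewrite diff_comp // ?diff_dotr //; exact: dotr_diff. Qed.

Let K_val a q : K a q = 'd f q a.
Proof. by rewrite diff_grad. Qed.

Let Delta a b h := f (p + h *: b + h *: a) - f (p + h *: a) - f (p + h *: b) + f p.

Let half a b e : 0 < e -> exists2 h0, 0 < h0 & forall h, 0 < h < h0 ->
  `|Delta a b h - h ^+ 2 * 'd (K a) p b| <= h ^+ 2 * e.
Proof.
move=> e0.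
pose S := `|a| + `|b| + 1.
have na := normr_ge0 a; have nb := normr_ge0 b.
have S0 : 0 < S by rewrite /S; lra.
have e'0 : 0 < e / (2 * S) by rewrite divr_gt0 // mulr_gt0.
have [del del0 Hd] := diff_eps (K_diff a) e'0.
exists (del / S); first by rewrite divr_gt0.
move=> h /andP [h0 hS].
pose F1 s := f (p + h *: b + s *: a).
pose F2 s := f (p + s *: a).
have D1 (s : R) : is_derive s (1:R) F1 (K a (p + h *: b + s *: a)).
  by rewrite K_val; exact: line_derive.
have D2 (s : R) : is_derive s (1:R) F2 (K a (p + s *: a)).
  by rewrite K_val; exact: line_derive.
have Du (s : R) : is_derive s (1:R) (F1 - F2)
    (K a (p + h *: b + s *: a) - K a (p + s *: a)).
  exact: is_deriveB.
have [] := @MVT R (F1 - F2)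
   (fun s => K a (p + h *: b + s *: a) - K a (p + s *: a)) 0 h h0
   (fun x _ => Du x) _.
  apply: derivable_within_continuous => x _.
  exact: (@ex_derive _ _ _ _ _ _ _ (Du x)).
move=> c; rewrite in_itv /= => /andP [c0 ch].
have -> : (F1 - F2) h = F1 h - F2 h by [].
have -> : (F1 - F2) 0 = F1 0 - F2 0 by [].
rewrite /F1 /F2.
rewrite !scale0r !addr0 subr0.
move=> E.
pose r1 := h *: b + c *: a.
pose r2 := c *: a.
have e1 : p + h *: b + c *: a = p + r1 by rewrite addrA.
rewrite e1 -/r2 in E.
have nr1 : `|r1| <= h * (`|a| + `|b|).
  rewrite /r1 (le_trans (ler_normD _ _)) // !normrZ !gtr0_norm // mulrDr.
  have : c * `|a| <= h * `|a| by rewrite ler_wpM2r // ltW.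
  lra.
have nr2 : `|r2| <= h * `|a|.
  by rewrite /r2 normrZ gtr0_norm // ler_wpM2r // ltW.
have hS' : h * S < del by rewrite -ltr_pdivlMr.
have hSa : h * (`|a| + `|b|) < del.
  apply: le_lt_trans hS'; rewrite ler_wpM2l ?ltW // /S; lra.
have hSb : h * `|a| < del.
  apply: le_lt_trans hS'; rewrite ler_wpM2l ?ltW // /S; lra.
have H1 := Hd r1 (le_lt_trans nr1 hSa).
have H2 := Hd r2 (le_lt_trans nr2 hSb).
have lin : 'd (K a) p r1 = h * 'd (K a) p b + 'd (K a) p r2.
  by rewrite /r1 linearD linearZ.
move: H1 H2; rewrite lin.
set X1 := K a (p + r1) - K a p - _.
set X2 := K a (p + r2) - K a p - _.
move=> H1 H2.
have -> : Delta a b h - h ^+ 2 * 'd (K a) p b = h * (X1 - X2).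
  rewrite /X1 /X2 (_ : Delta a b h = (K a (p + r1) - K a (p + r2)) * h).
    by ring.
  by rewrite -E /Delta; lra.
rewrite normrM gtr0_norm //.
suff : `|X1 - X2| <= h * e.
  by move=> H; rewrite expr2 -mulrA ler_wpM2l // ltW.
set e' := e / (2 * S) in H1 H2 e'0.
have t1 : e' * `|r1| <= e' * (h * (`|a| + `|b|)) := ler_wpM2l (ltW e'0) nr1.
have t2 : e' * `|r2| <= e' * (h * `|a|) := ler_wpM2l (ltW e'0) nr2.
have t3 : h * (`|a| + `|b|) + h * `|a| <= h * (2 * S).
  by rewrite -mulrDr ler_wpM2l ?ltW // /S; lra.
have t4 : e' * (h * (`|a| + `|b|) + h * `|a|) <= e' * (h * (2 * S)) :=
  ler_wpM2l (ltW e'0) t3.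
have t5 : e' * (h * (2 * S)) = h * e by rewrite /e'; field; rewrite gt_eqF.
rewrite mulrDr t5 in t4.
have := ler_normB X1 X2.
lra.
Qed.

Lemma schwarz a b : dot ('d (grad f) p a) b = dot ('d (grad f) p b) a.
Proof.
rewrite -(dK b a) -(dK a b).
apply/eqP; rewrite -subr_eq0; apply/eqP.
set x := _ - _.
suff H : forall e, 0 < e -> `|x| <= 2 * e.
  apply/normr0_eq0; case: (ltP 0 `|x|) => xp; last first.
    by apply/le_anti; rewrite xp normr_ge0.
  have := H (`|x| / 4) (divr_gt0 xp (ltr0n _ 4)); lra.
move=> e e0.
have [h1 h10 H1] := half a b e0.
have [h2 h20 H2] := half b a e0.
pose h := Num.min h1 h2 / 2.
have hm0 : 0 < Num.min h1 h2 by rewrite lt_min h10 h20.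
have h0 : 0 < h by rewrite /h divr_gt0.
have hh1 : h < h1.
  by apply: (@lt_le_trans _ _ (Num.min h1 h2)); [rewrite /h; lra|rewrite ge_min lexx].
have hh2 : h < h2.
  by apply: (@lt_le_trans _ _ (Num.min h1 h2)); [rewrite /h; lra|rewrite ge_min lexx orbT].
have {H1}H1 := H1 h (andb_true_intro (conj h0 hh1)).
have {H2}H2 := H2 h (andb_true_intro (conj h0 hh2)).
have D : Delta a b h = Delta b a h.
  by rewrite /Delta [p + h *: a + h *: b]addrAC; lra.
have : `|h ^+ 2 * x| <= h ^+ 2 * e + h ^+ 2 * e.
  have -> : h ^+ 2 * x = (Delta a b h - h ^+ 2 * 'd (K a) p b)
      - (Delta b a h - h ^+ 2 * 'd (K b) p a) by rewrite D /x mulrBr; lra.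
  exact: le_trans (ler_normB _ _) (lerD H1 H2).
have h20' : 0 < h ^+ 2 by rewrite exprn_gt0.
rewrite normrM (gtr0_norm h20') -mulrDr ler_pM2l //.
lra.
Qed.

End Schwarz.


Section Lip.
Context {R : realType} {d : nat}.
Implicit Types p q a b v w : 'rV[R]_d.

Lemma bil_bound (f : 'rV[R]_d -> R) p (L : R) a b : convex_fun f ->
  (forall x, differentiable f x) -> differentiable (grad f) p ->
  loewner_le_scalar (hessian f p) L -> 0 <= L ->
  dot ('d (grad f) p a) b <= L * enorm a * enorm b.
Proof.
move=> cf df dG hL L0.
have Q0 u : 0 <= dot ('d (grad f) p u) u by exact: psd.
have QL u : dot ('d (grad f) p u) u <= L * enorm u ^+ 2.
  by rewrite -quad_hess //; exact: hL.
have sym := schwarz df dG.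
have CS : dot ('d (grad f) p a) b ^+ 2 <=
    dot ('d (grad f) p a) a * dot ('d (grad f) p b) b.
  apply: quad_disc => t; have := Q0 (a + t *: b).
  rewrite linearD linearZ /= !(dotDl, dotDr, dotZl, dotZr) (sym b a).
  move=> H; apply: le_trans H _; rewrite le_eqVlt; apply/orP; left; apply/eqP.
  ring.
apply: sqr_le; first by rewrite !mulr_ge0 // enorm_ge0.
apply: (le_trans CS).
have -> : (L * enorm a * enorm b) ^+ 2 = (L * enorm a ^+ 2) * (L * enorm b ^+ 2).
  by ring.
by apply: ler_pM => //.
Qed.

Lemma lipschitz (f : 'rV[R]_d -> R) x0 (M : \bar R) (L : R) z : convex_fun f ->
  (forall x, differentiable f x) ->
  (forall x, eball x0 M x -> differentiable (grad f) x) ->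
  (forall x, eball x0 M x -> loewner_le_scalar (hessian f x) L) ->
  0 <= L -> eball x0 M z ->
  enorm (grad f z - grad f x0) <= L * enorm (z - x0).
Proof.
move=> cf df dG hL L0 hz.
set w := z - x0; set e := grad f z - grad f x0.
have seg (t : R) : 0 <= t <= 1 -> eball x0 M (x0 + t *: w).
  move=> /andP [t0 t1]; rewrite /eball /=.
  have -> : x0 + t *: w - x0 = t *: w by rewrite addrAC subrr add0r.
  apply: le_trans hz; rewrite lee_fin enormZ ger0_norm //.
  by rewrite ler_piMl // enorm_ge0.
have Du (t : R) : 0 <= t <= 1 -> is_derive t (1:R)
   (fun s => (dotr e \o grad f) (x0 + s *: w))
   ('d (dotr e \o grad f) (x0 + t *: w) w).
  move=> /seg ht; apply: line_derive; apply: differentiable_comp.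
    exact: dG.
  exact: dotr_diff.
have [] := @MVT R (fun s => (dotr e \o grad f) (x0 + s *: w))
  (fun t => 'd (dotr e \o grad f) (x0 + t *: w) w) 0 1 ltr01 _ _.
- move=> t; rewrite in_itv /= => /andP [t0 t1]; apply: Du.
  by rewrite !ltW.
- apply: derivable_within_continuous => t; rewrite in_itv /= => ht.
  exact: (@ex_derive _ _ _ _ _ _ _ (Du t ht)).
move=> c; rewrite in_itv /= => /andP [c0 c1].
rewrite /= scale1r scale0r addr0 subr0 mulr1.
have -> : x0 + w = z by rewrite /w addrC subrK.
have hc : eball x0 M (x0 + c *: w) by apply: seg; rewrite !ltW.
rewrite diff_comp; [|exact: dG|exact: dotr_diff].
rewrite diff_dotr /= /dotr -dotBl.
have -> : grad f z - grad f x0 = e by [].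
rewrite -enorm_sqr => H.
have := bil_bound w e cf df (dG _ hc) (hL _ hc) L0.
rewrite -H => H2.
case: (ltP 0 (enorm e)) => ep.
  by rewrite expr2 ler_pM2r // in H2.
by apply: le_trans ep _; rewrite mulr_ge0 // enorm_ge0.
Qed.

End Lip.


Section Final.
Context {R : realType} {d : nat}.

Lemma coord_le (u : 'rV[R]_d) i : `|u ord0 i| <= `|u|.
Proof.
have -> : `|u| = mx_norm u by [].
rewrite mx_normrE.
exact: (le_bigmax _ (fun ij : 'I_1 * 'I_d => `|u ij.1 ij.2|) (ord0, i)).
Qed.

Lemma enorm_le_norm (u : 'rV[R]_d) : enorm u <= (d%:R + 1) * `|u|.
Proof.
apply: sqr_le; first by rewrite mulr_ge0 // addr_ge0.
rewrite enorm_sqr /dot.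
apply: (@le_trans _ _ (\sum_(i < d) `|u| ^+ 2)).
  apply: ler_sum => i _; rewrite -expr2 -real_normK ?num_real //.
  have := coord_le u i; have := normr_ge0 (u ord0 i); rewrite !expr2; nra.
rewrite sumr_const card_ord -mulr_natl.
have n0 := normr_ge0 u; have d0 : (0 : R) <= d%:R by [].
rewrite -mulr_natl ?mulr1.
have : 0 <= (d%:R ^+ 2 + d%:R + 1) * `|u| ^+ 2.
  by rewrite mulr_ge0 ?sqr_ge0 // !addr_ge0 ?sqr_ge0.
rewrite !expr2; lra.
Qed.

Lemma approach (G : 'rV[R]_d -> 'rV[R]_d) x0 w eta :
  differentiable G (x0 + w) -> 0 < eta ->
  exists t : R, [/\ 0 <= t, t < 1 &
    enorm (G (x0 + w) - G (x0 + t *: w)) <= eta].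
Proof.
move=> dG e0.
have cG := differentiable_continuous dG.
have e'0 : 0 < eta / (d%:R + 1) by rewrite divr_gt0 // ltr_wpDl.
have /cvgrPdist_lt /(_ _ e'0) /nbhs_ballP [del del0 Hd] := cG.
have nw := normr_ge0 w.
pose k := del / (`|w| + 1).
have k0 : 0 < k by rewrite /k divr_gt0 // ltr_wpDl.
have kw : k * (`|w| + 1) = del by rewrite /k divfK // gt_eqF // ltr_wpDl.
pose mu := Num.min 1 k / 2.
have m0 : 0 < Num.min 1 k by rewrite lt_min ltr01 k0.
have m1 : Num.min 1 k <= 1 by rewrite ge_min lexx.
have m2 : Num.min 1 k <= k by rewrite ge_min lexx orbT.
exists (1 - mu); split.
- rewrite /mu; lra.
- rewrite /mu; lra.
have := Hd (x0 + (1 - mu) *: w).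
rewrite -ball_normE /=.
have muw : `|mu *: w| < del.
  rewrite normrZ gtr0_norm /mu ?divr_gt0 //.
  have : Num.min 1 k / 2 * `|w| <= k / 2 * `|w|.
    by rewrite ler_wpM2r // ler_pM2r.
  have : k / 2 * `|w| < k * (`|w| + 1) by nra.
  lra.
have -> : x0 + w - (x0 + (1 - mu) *: w) = mu *: w.
  by rewrite opprD addrACA subrr add0r scalerBl scale1r opprB addrC subrK.
move=> /(_ muw) H.
apply: (le_trans (enorm_le_norm _)).
rewrite -(@ler_pM2l _ ((d%:R + 1)^-1)) ?invr_gt0 ?ltr_wpDl // mulrA mulVf ?gt_eqF ?ltr_wpDl //.
by rewrite mul1r mulrC ltW.
Qed.

End Final.

Unset Implicit Arguments.

Theorem lemmaE3 (R : realType) (d : nat) (f : 'rV[R]_d -> R)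
  (x0 : 'rV[R]_d) (M : \bar R) (L lam : R) :
  convex_fun f ->
  (forall x, differentiable f x) ->
  (forall x, eball x0 M x -> differentiable (grad f) x) ->
  (forall x, eball x0 M x -> loewner_le_scalar (hessian f x) L) ->
  (0 < M)%E -> 0 < L ->
  enorm (grad f x0) < lam ->
  forall x, eball x0 (Order.min ((lam - enorm (grad f x0)) / L)%:E M) x ->
    f x = inf (range (fun y => f y + lam * enorm (x - y))) /\
    [set y | forall z, f y + lam * enorm (x - y) <= f z + lam * enorm (x - z)]
      = [set x].
Proof.
move=> cf df dG hL M0 L0 lg x hx.
have enorm0 : enorm (0 : 'rV[R]_d) = 0 by rewrite enormE dot0l sqrtr0.
set g0 := grad f x0.
set ka := lam - enorm g0.
have k0 : 0 < ka by rewrite /ka subr_gt0.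
set w := x - x0.
set rho := enorm w.
have r0 : 0 <= rho by exact: enorm_ge0.
move: hx; rewrite /eball /= le_min => /andP [hr hM].
rewrite lee_fin ler_pdivlMr // in hr.
have hxM : eball x0 M x by [].
have xw : x = x0 + w by rewrite /w addrC subrK.
have key : forall y, y != x -> f x < f y + lam * enorm (x - y).
  move=> y yx; rewrite ltNge; apply/negP => Hy.
  set s := enorm (x - y).
  have s0 : 0 < s.
    rewrite lt_def enorm_ge0 andbT; apply/eqP => /enorm_eq0 /eqP.
    by rewrite subr_eq0 eq_sym (negbTE yx).
  have eta0 : 0 < ka * s / (rho + 1) by rewrite !divr_gt0 ?mulr_gt0 // ltr_wpDl.
  have dGx : differentiable (grad f) (x0 + w) by rewrite -xw; exact: dG.
  have [t [t0 t1 Ht]] := approach dGx eta0.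
  rewrite -xw in Ht.
  set z := x0 + t *: w in Ht.
  have zx0 : z - x0 = t *: w by rewrite /z addrAC subrr add0r.
  have hz : eball x0 M z.
    rewrite /eball /= zx0; apply: le_trans hM; rewrite lee_fin enormZ ger0_norm //.
    have : t * rho <= 1 * rho by rewrite ler_wpM2r // ltW.
    by rewrite mul1r.
  have Lz := lipschitz cf df dG hL (ltW L0) hz.
  rewrite zx0 enormZ ger0_norm // -/rho in Lz.
  have Nz : enorm (grad f z) <= enorm g0 + L * (t * rho).
    have := enormD g0 (grad f z - g0); rewrite addrC subrK; lra.
  have F1 := first_order cf df z y.
  have F2 := first_order cf df x z.
  have yz : y - z = (y - x) + (1 - t) *: w.
    by apply/rowP => i; rewrite /z /w !mxE; ring.
  have zx : z - x = - ((1 - t) *: w).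
    by apply/rowP => i; rewrite /z /w !mxE; ring.
  rewrite yz dotDr dotZr in F1.
  rewrite zx dotNr dotZr in F2.
  have CS1 : - (enorm (grad f z) * s) <= dot (grad f z) (y - x).
    by have := dot_ge (grad f z) (y - x); rewrite enormB.
  have CS2 : dot (grad f x) w - dot (grad f z) w <= enorm (grad f x - grad f z) * rho.
    by rewrite -dotBl; exact: dot_le.
  have T0 : 0 <= 1 - t by lra.
  have a1 := ler_wpM2l T0 CS2.
  have a2 : (1 - t) * (enorm (grad f x - grad f z) * rho) <=
      (1 - t) * (ka * s / (rho + 1) * rho).
    by apply: ler_wpM2l => //; apply: ler_wpM2r.
  have a3 : enorm (grad f z) * s <= (enorm g0 + L * (t * rho)) * s.
    by apply: ler_wpM2r => //; exact: ltW.
  have a5 : L * (t * rho) * s <= t * ka * s.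
    apply: ler_wpM2r; first exact: ltW.
    by rewrite mulrCA; apply: ler_wpM2l => //; rewrite mulrC.
  have a6 : 0 < (1 - t) * (ka * s - ka * s / (rho + 1) * rho).
    apply: mulr_gt0; first lra.
    rewrite subr_gt0 mulrAC ltr_pdivrMr ?ltr_wpDl //.
    by rewrite ltr_pM2l ?mulr_gt0 //; lra.
  move: a1 a2 a3 a5 a6 F1 F2 Hy CS1; rewrite /ka /s; lra.
set F := fun y => f y + lam * enorm (x - y).
have Fx : F x = f x by rewrite /F subrr enorm0 mulr0 addr0.
have lb : lbound (range F) (f x).
  move=> _ [y _ <-]; case: (eqVneq y x) => [->|yx]; first by rewrite Fx.
  exact/ltW/key.
have Fr : range F (F x) by exists x.
split.
  apply/le_anti/andP; split.
    by apply: lb_le_inf => //; exists (F x).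
  have hl : has_lbound (range F) by exists (f x).
  by have := ge_inf hl Fr; rewrite Fx.
apply/seteqP; split => y /=.
  move=> Hy; case: (eqVneq y x) => // yx; exfalso.
  have := key y yx; have := Hy x; rewrite subrr enorm0 mulr0 addr0; lra.
move=> -> z; rewrite subrr enorm0 mulr0 addr0.
by case: (eqVneq z x) => [->|zx]; [rewrite subrr enorm0 mulr0 addr0|exact/ltW/key].
Qed.
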